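(* Consider the Public WOM model described in the context. Every solution $(p_2^*,\underline{k}^* )$ of the seller's problem $$\max_{p_2\in[0,1],\ \underline{k}}\ \pi(p_2,\underline{k})=(1-\beta)+\beta\left(p_2-\frac{c}{\underline{k}\,\phi(L(\underline{k}),p_2)}\right)(1-p_2)\,\Gamma(L(\underline{k}))$$ satisfies $p_2^*=1/2$, the corresponding bonus is $b=\dfrac{c}{\underline{k}^*\,\phi(L(\underline{k}^* ),p_2^* )}$, and $$\underline{k}^*\in\arg\max_{\underline{k}}\left[\frac{\Gamma(L(\underline{k}))}{4}-\frac{c\,\Gamma(L(\underline{k}))}{2\,\underline{k}\,\phi(L(\underline{k}),1/2)}\right].$$
   Context: A seller (zero marginal cost) faces a unit mass of consumers, each demanding at most one unit. A fraction $1-\beta\in(0,1)$ is informed about the product and has reservation value $1$ (they are charged price $p_1=1$); the fraction $\beta$ is uninformed, with reservation value $v\sim U[0,1]$, and is charged price $p_2$, so an informed-by-referral consumer buys with probability $1-p_2$. Informed consumers are linked to uninformed ones by a directed bipartite network: out-degrees of informed consumers follow a probability distribution $f$ on the positive integers, in-degrees of uninformed consumers follow a distribution $g$, with $(1-\beta)\sum_k k f(k)=\beta\sum_k k g(k)$. If a fraction $L\in[0,1]$ of links carries information, the fraction of uninformed consumers who receive it is $\Gamma(L)=1-\sum_{k} g(k)(1-L)^k$, and the expected value, per unit of bonus, that an informed consumer gets from passing information along one link is $\phi(L,p_2)=(1-p_2)\sum_k g(k)\frac{1-(1-L)^k}{kL}$. The seller pays a bonus $b$ per successful referral. Public WOM: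 an informed consumer with out-degree $k$ can inform all her out-neighbours at a lump-sum cost $c>0$, and does so iff $k\,b\,\phi(L,p_2)\ge c$; hence there is a degree cutoff $\underline{k}$, the fraction of active links is $L(\underline{k})=\sum_{k\ge\underline{k}}f(k)$, and the bonus implementing cutoff $\underline{k}$ is $b=c/(\underline{k}\,\phi(L(\underline{k}),p_2))$, so the seller's problem reduces to choosing $(p_2,\underline{k})$ as in the claim. *)

(* Defs.v *)
From Stdlib Require Import Reals Lra.
From Coquelicot Require Import Coquelicot.
Open Scope R_scope.

(* A probability distribution on the positive integers, as d : nat -> R
   with d 0 = 0, nonnegative, summing to 1. *)
Definition posint_distr (d : nat -> R) : Prop :=
  d O = 0 /\ (forall k, 0 <= d k) /\ is_series d 1.

Definition has_mean (d : nat -> R) (m : R) : Prop :=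
  is_series (fun k => INR k * d k) m.

(* Fraction of active links for degree cutoff kc: L(kc) = sum_{k >= kc} f(k). *)
Definition Lcut (f : nat -> R) (kc : nat) : R :=
  Series (fun n => f (n + kc)%nat).

Definition Gamma (g : nat -> R) (L : R) : R :=
  1 - Series (fun k => g k * (1 - L) ^ k).

Definition phi (g : nat -> R) (L p2 : R) : R :=
  (1 - p2) * Series (fun k => g k * ((1 - (1 - L) ^ k) / (INR k * L))).

Definition bonus (f g : nat -> R) (c p2 : R) (kc : nat) : R :=
  c / (INR kc * phi g (Lcut f kc) p2).

Definition profit (f g : nat -> R) (beta c p2 : R) (kc : nat) : R :=
  (1 - beta) + beta * (p2 - bonus f g c p2 kc) * (1 - p2) * Gamma g (Lcut f kc).

(* Feasible choices: p2 in [0,1], cutoff a positive integer, and the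
   implementing bonus well defined (phi > 0). *)
Definition feasible (f g : nat -> R) (p2 : R) (kc : nat) : Prop :=
  0 <= p2 <= 1 /\ (1 <= kc)%nat /\ 0 < phi g (Lcut f kc) p2.

Definition kobj (f g : nat -> R) (c : R) (kc : nat) : R :=
  Gamma g (Lcut f kc) / 4
  - c * Gamma g (Lcut f kc) / (2 * INR kc * phi g (Lcut f kc) (1/2)).

(* Main.v *)
Require Import Defs.
From Stdlib Require Import Reals Lra Lia Classical.
From Coquelicot Require Import Coquelicot.
Open Scope R_scope.

Lemma Series_zero : Series (fun _ => 0) = 0.
Proof.
  rewrite (Series_ext (fun _ => 0) (fun n => 0 * 1)) by (intros; ring).
  rewrite Series_scal_l. ring.
Qed.

Lemma Series_nonneg (h : nat -> R) : (forall n, 0 <= h n) -> ex_series h -> 0 <= Series h.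
Proof.
  intros H E. rewrite <- Series_zero.
  apply Series_le; auto. intros; split; [lra|auto].
Qed.

Lemma pow_01 (q : R) (n : nat) : 0 <= q <= 1 -> 0 <= q ^ n <= 1.
Proof.
  intros H. induction n; simpl; [lra|]. split; nra.
Qed.

Lemma Series_ge_term (h : nat -> R) (k : nat) :
  (forall n, 0 <= h n) -> ex_series h -> h k <= Series h.
Proof.
  intros H E.
  rewrite (Series_incr_n h (S k)); [| lia | exact E].
  simpl pred.
  assert (0 <= Series (fun j => h (S k + j)%nat)) by (apply Series_nonneg; auto; apply (ex_series_incr_n h (S k)); auto).
  destruct k as [|j]; simpl in *; [lra|].
  assert (0 <= sum_f_R0 h j) by (apply cond_pos_sum; auto). lra.
Qed.

Lemma Lcut_bounds (f : nat -> R) (ks : nat) :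
  posint_distr f -> (1 <= ks)%nat -> 0 <= Lcut f ks <= 1.
Proof.
  intros [_ [Hp Hs]] Hk.
  assert (E : ex_series f) by (exists 1; auto).
  assert (Hf : Series f = 1) by (apply is_series_unique; auto).
  unfold Lcut.
  rewrite (Series_ext _ (fun n => f (ks + n)%nat)) by (intros; f_equal; lia).
  assert (E2 : ex_series (fun n => f (ks + n)%nat)) by (apply ex_series_incr_n; auto).
  pose proof (Series_incr_n f ks ltac:(lia) E) as H.
  assert (0 <= sum_f_R0 f (pred ks)) by (apply cond_pos_sum; auto).
  assert (0 <= Series (fun n => f (ks + n)%nat)) by (apply Series_nonneg; auto).
  lra.
Qed.

Lemma S_at_zero (g : nat -> R) :
  Series (fun k => g k * ((1 - (1 - 0) ^ k) / (INR k * 0))) = 0.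
Proof.
  rewrite (Series_ext _ (fun _ => 0)); [apply Series_zero|].
  intros k. unfold Rdiv. rewrite Rmult_0_r, Rinv_0. ring.
Qed.

Lemma Gamma_pos (g : nat -> R) (L : R) :
  posint_distr g -> 0 < L <= 1 -> 0 < Gamma g L.
Proof.
  intros [H0 [Hp Hs]] HL.
  set (q := 1 - L).
  assert (Hq : 0 <= q < 1) by (unfold q; lra).
  assert (E : ex_series g) by (exists 1; auto).
  assert (Hg : Series g = 1) by (apply is_series_unique; auto).
  assert (E2 : ex_series (fun k => g k * q ^ k)).
  { apply (@ex_series_le R_AbsRing R_CompleteNormedModule _ g); auto. intros n. change (norm (g n * q ^ n)) with (Rabs (g n * q ^ n)).
    pose proof (pow_01 q n ltac:(lra)). pose proof (Hp n).
    rewrite Rabs_pos_eq by nra. nra. }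
  unfold Gamma. fold q. rewrite <- Hg.
  rewrite <- Series_minus by auto.
  assert (Hk : exists k0, 0 < g k0).
  { apply NNPP; intros Hn.
    assert (forall n, g n = 0).
    { intros n. pose proof (Hp n). destruct (Rle_lt_or_eq_dec 0 (g n) (Hp n)) as [h|h]; [|auto].
      exfalso; apply Hn; exists n; auto. }
    rewrite (Series_ext g (fun _ => 0)) in Hg by auto. rewrite Series_zero in Hg. lra. }
  destruct Hk as [k0 Hk0].
  destruct k0 as [|j]; [lra|].
  assert (Ht : forall n, 0 <= g n - g n * q ^ n).
  { intros n. pose proof (pow_01 q n ltac:(lra)). pose proof (Hp n). nra. }
  assert (Ej : ex_series (fun n => g n - g n * q ^ n)).
  { apply (ex_series_minus g); auto. }
  pose proof (Series_ge_term _ (S j) Ht Ej) as HH.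
  assert (q ^ S j <= q). { simpl. pose proof (pow_01 q j ltac:(lra)). nra. }
  simpl in *. assert (0 < g (S j) * (1 - q * q ^ j)) by (apply Rmult_lt_0_compat; lra). nra.
Qed.

Lemma profit_half (f g : nat -> R) beta c kc :
  feasible f g (1/2) kc ->
  profit f g beta c (1/2) kc = (1 - beta) + beta * kobj f g c kc.
Proof.
  intros [_ [hk hp]].
  assert (INR kc <> 0) by (apply not_0_INR; lia).
  unfold profit, bonus, kobj. field. split; lra.
Qed.

Theorem proposition1 :
  forall (beta c : R) (f g : nat -> R) (mf mg : R),
    0 < beta < 1 -> 0 < c ->
    posint_distr f -> posint_distr g ->
    has_mean f mf -> has_mean g mg ->
    (1 - beta) * mf = beta * mg ->
    forall (p2s : R) (ks : nat),
      feasible f g p2s ks ->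
      (forall (p2 : R) (kc : nat), feasible f g p2 kc ->
         profit f g beta c p2 kc <= profit f g beta c p2s ks) ->
      p2s = 1/2
      /\ bonus f g c p2s ks = c / (INR ks * phi g (Lcut f ks) (1/2))
      /\ feasible f g (1/2) ks
      /\ (forall kc : nat, feasible f g (1/2) kc -> kobj f g c kc <= kobj f g c ks).
Proof.
  intros beta c f g mf mg Hb Hc Hf Hg _ _ _ p2s ks Hfe Hopt.
  destruct Hfe as [[p0 p1] [hk hphi]].
  set (L := Lcut f ks) in *.
  set (S := Series (fun k => g k * ((1 - (1 - L) ^ k) / (INR k * L)))).
  assert (HphiE : forall p, phi g L p = (1 - p) * S) by reflexivity.
  rewrite HphiE in hphi.
  assert (Hp1 : p2s < 1).
  { destruct (Rle_lt_or_eq_dec p2s 1 p1) as [h|h]; auto. subst p2s.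
    rewrite Rminus_diag, Rmult_0_l in hphi. lra. }
  assert (HS : 0 < S).
  { apply (Rmult_lt_reg_l (1 - p2s)); lra. }
  pose proof (Lcut_bounds f ks Hf hk) as HLb. fold L in HLb.
  assert (HL0 : L <> 0).
  { intros e. unfold S in HS. rewrite e in HS. rewrite S_at_zero in HS. lra. }
  assert (HG : 0 < Gamma g L) by (apply Gamma_pos; auto; lra).
  assert (Hk : INR ks <> 0) by (apply not_0_INR; lia).
  assert (Hprof : forall p, p < 1 -> profit f g beta c p ks =
     (1 - beta) + beta * (p * (1 - p) * Gamma g L - c * Gamma g L / (INR ks * S))).
  { intros p hp. unfold profit, bonus. fold L. rewrite HphiE. field. repeat split; lra. }
  assert (Hfh : feasible f g (1/2) ks).
  { split; [lra|]. split; auto. fold L. rewrite HphiE. nra. }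
  assert (Hps : p2s = 1/2).
  { pose proof (Hopt (1/2) ks Hfh) as H.
    rewrite !Hprof in H by lra.
    assert (0 < beta * Gamma g L) by (apply Rmult_lt_0_compat; lra).
    assert (beta * Gamma g L * ((p2s - 1/2) * (p2s - 1/2)) <= 0).
    { replace (beta * Gamma g L * ((p2s - 1/2) * (p2s - 1/2))) with
        (((1 - beta) + beta * (1/2 * (1 - 1/2) * Gamma g L - c * Gamma g L / (INR ks * S)))
         - ((1 - beta) + beta * (p2s * (1 - p2s) * Gamma g L - c * Gamma g L / (INR ks * S))))
        by (field; split; lra).
      lra. }
    assert (0 <= (p2s - 1/2) * (p2s - 1/2)) by apply Rle_0_sqr.
    assert (E0 : (p2s - 1/2) * (p2s - 1/2) = 0).
    { destruct (Rle_lt_or_eq_dec 0 ((p2s - 1/2) * (p2s - 1/2))) as [h|h]; auto.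
      assert (0 < beta * Gamma g L * ((p2s - 1/2) * (p2s - 1/2))) by (apply Rmult_lt_0_compat; lra).
      lra. }
    apply Rmult_integral in E0. lra. }
  subst p2s.
  split; [reflexivity|]. split; [reflexivity|]. split; [exact Hfh|].
  intros kc Hkc.
  pose proof (Hopt (1/2) kc Hkc) as H.
  rewrite !profit_half in H by auto.
  apply (Rmult_le_reg_l beta); lra.
Qed.
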